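(* Let $\pi_0,\pi_1,\dots$ be generated by policy mirror descent (PMD) with step sizes $\eta_t>0$ that are non-decreasing in $t$. Then for every $k\ge1$ and every $s\in\mathcal S$, $$V^{\pi_k}(s)-V^{\pi^*}(s)\le\frac{\sum_{q\in\mathcal S}\kappa^{\pi^*}_s(q)\,\big[\eta_0\big(V^{\pi_0}(q)-V^{\pi^*}(q)\big)+D^{\pi^*}_{\pi_0}(q)\big]}{\eta_0(1-\gamma)k}.$$
   Context: An infinite-horizon discounted MDP: finite state space $\mathcal S$, finite action space $\mathcal A$, transition probabilities $\mathcal P(s'\mid s,a)$, cost $c:\mathcal S\times\mathcal A\to\mathbb R$, discount $\gamma\in[0,1)$. A policy $\pi$ assigns $\pi(\cdot\mid s)\in\Delta_{|\mathcal A|}$ (probability simplex) to each state. Let $\omega$ be a differentiable convex distance-generating function on $\Delta_{|\mathcal A|}$, and for policies $\pi,\pi'$ let $D^{\pi'}_{\pi}(s):=\omega(\pi'(\cdot\mid s))-\omega(\pi(\cdot\mid s))-\langle\nabla\omega(\pi(\cdot\mid s)),\pi'(\cdot\mid s)-\pi(\cdot\mid s)\rangle$ (Bregman distance). For each $s$, $p\mapsto h^p(s)$ is a closed convex function on $\Delta_{|\mathcal A|}$ that is $\mu_h$-strongly convex w.r.t. this Bregman distance for some $\mu_h\ge0$: $h^{p}(s)-h^{p'}(s)-\langle (h')^{p'}(s,\cdot),p-p'\rangle\ge\mu_h[\omega(p)-\omega(p')-\langle\nabla\omega(p'),p-p'\rangle]$ for subgradients $(h')^{p'}(s,\cdot)$.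 $V^\pi(s)=\mathbb E[\sum_{t\ge0}\gamma^t(c(s_t,a_t)+h^{\pi(\cdot\mid s_t)}(s_t))\mid s_0=s,\ a_t\sim\pi(\cdot\mid s_t),\ s_{t+1}\sim\mathcal P(\cdot\mid s_t,a_t)]$, $Q^\pi(s,a)$ the same with $a_0=a$. $\pi^*$ is an optimal policy ($V^{\pi^*}(s)\le V^\pi(s)$ for all $\pi,s$). $\kappa^\pi_s(q):=(1-\gamma)\sum_{t\ge0}\gamma^t\Pr^\pi\{s_t=q\mid s_0=s\}$. PMD: given $\pi_0$ and step sizes $\eta_t$, for all $s$, $\pi_{t+1}(\cdot\mid s)=\operatorname{argmin}_{p\in\Delta_{|\mathcal A|}}\{\eta_t[\langle Q^{\pi_t}(s,\cdot),p\rangle+h^{p}(s)]+\omega(p)-\omega(\pi_t(\cdot\mid s))-\langle\nabla\omega(\pi_t(\cdot\mid s)),p-\pi_t(\cdot\mid s)\rangle\}$. *)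

(* Defs.v *)
From HB Require Import structures.
From mathcomp Require Import all_boot all_order all_algebra.
From mathcomp Require Import all_classical all_reals all_analysis.
Set Implicit Arguments. Unset Strict Implicit. Unset Printing Implicit Defensive.
Import Order.TTheory GRing.Theory Num.Theory.
Import numFieldNormedType.Exports.
Local Open Scope classical_set_scope.
Local Open Scope ring_scope.

Section MDP.
Variable R : realType.
Variable S : finType.
Variable nA : nat.             (* action space = 'I_nA *)

Definition simplex (p : 'rV[R]_nA) : Prop :=
  (forall a, 0 <= p ord0 a) /\ \sum_(a < nA) p ord0 a = 1.

Definition inner (u : 'I_nA -> R) (p : 'rV[R]_nA) : R :=
  \sum_(a < nA) u a * p ord0 a.

Definition convex_on_simplex (f : 'rV[R]_nA -> R) : Prop :=
  forall p q, simplex p -> simplex q -> forall t : R, 0 <= t <= 1 ->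
    f (t *: p + (1 - t) *: q) <= t * f p + (1 - t) * f q.

(* closedness (lower semicontinuity relative to the simplex) *)
Definition closed_on_simplex (f : 'rV[R]_nA -> R) : Prop :=
  forall p, simplex p -> forall e : R, 0 < e ->
    \forall q \near p, simplex q -> f p - e < f q.

Definition subgrad_on_simplex (f : 'rV[R]_nA -> R) (p' : 'rV[R]_nA)
  (g : 'I_nA -> R) : Prop :=
  forall p, simplex p -> f p' + inner g (p - p') <= f p.

Definition bregman (omega : 'rV[R]_nA -> R) (p p' : 'rV[R]_nA) : R :=
  omega p - omega p' - 'd omega p' (p - p').

Definition dgf (omega : 'rV[R]_nA -> R) : Prop :=
  (forall p, simplex p -> differentiable omega p) /\ convex_on_simplex omega.

Definition reg_ok (omega : 'rV[R]_nA -> R) (h : S -> 'rV[R]_nA -> R) (muh : R) : Prop :=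
  0 <= muh /\
  forall s, convex_on_simplex (h s) /\ closed_on_simplex (h s) /\
    forall p p' g, simplex p -> simplex p' -> subgrad_on_simplex (h s) p' g ->
      h s p - h s p' - inner g (p - p') >= muh * bregman omega p p'.

Definition rseries (u : nat -> R) : R := limn (fun n => \sum_(0 <= t < n) u t).

Definition policy := S -> 'rV[R]_nA.
Definition is_policy (pi : policy) : Prop := forall s, simplex (pi s).

Definition is_mdp (P : S -> 'I_nA -> S -> R) (gamma : R) : Prop :=
  (forall s a s', 0 <= P s a s') /\ (forall s a, \sum_(s' : S) P s a s' = 1) /\
  0 <= gamma < 1.

Variables (P : S -> 'I_nA -> S -> R) (c : S -> 'I_nA -> R)
          (h : S -> 'rV[R]_nA -> R) (gamma : R).

Definition Ppi (pi : policy) (s q : S) : R :=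
  \sum_(a < nA) pi s ord0 a * P s a q.

(* Pr^pi { s_t = q | s_0 = s } *)
Fixpoint Pt (pi : policy) (t : nat) (s q : S) : R :=
  match t with
  | O => if s == q then 1 else 0
  | t'.+1 => \sum_(r : S) Pt pi t' s r * Ppi pi r q
  end.

Definition cpi (pi : policy) (q : S) : R :=
  \sum_(a < nA) pi q ord0 a * c q a + h q (pi q).

Definition V (pi : policy) (s : S) : R :=
  rseries (fun t => gamma ^+ t * \sum_(q : S) Pt pi t s q * cpi pi q).

(* same expectation with a_0 = a *)
Definition Q (pi : policy) (s : S) (a : 'I_nA) : R :=
  rseries (fun t =>
    match t with
     | O => c s a + h s (pi s)
     | t'.+1 => gamma ^+ t *
         \sum_(s' : S) P s a s' * \sum_(q : S) Pt pi t' s' q * cpi pi q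
     end).

Definition kappa (pi : policy) (s q : S) : R :=
  (1 - gamma) * rseries (fun t => gamma ^+ t * Pt pi t s q).

Definition optimal (pistar : policy) : Prop :=
  is_policy pistar /\ forall pi, is_policy pi -> forall s, V pistar s <= V pi s.

Definition pmd_obj (omega : 'rV[R]_nA -> R) (eta : R) (pi : policy) (s : S)
  (p : 'rV[R]_nA) : R :=
  eta * (inner (Q pi s) p + h s p) + bregman omega p (pi s).

Definition is_pmd (omega : 'rV[R]_nA -> R) (eta : nat -> R) (pis : nat -> policy) : Prop :=
  is_policy (pis 0%N) /\
  forall t s, simplex (pis t.+1 s) /\
    forall p, simplex p -> pmd_obj omega (eta t) (pis t) s (pis t.+1 s)
                         <= pmd_obj omega (eta t) (pis t) s p.

End MDP.

(* Main.v *)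
Require Import Defs.
From HB Require Import structures.
From mathcomp Require Import all_boot all_order all_algebra.
From mathcomp Require Import all_classical all_reals all_analysis.
From mathcomp Require Import ring lra.
Import Order.TTheory GRing.Theory Num.Theory.
Import numFieldNormedType.Exports.
Local Open Scope classical_set_scope.
Local Open Scope ring_scope.
Set Implicit Arguments. Unset Strict Implicit. Unset Printing Implicit Defensive.
Lemma Ppi_ge0 (R : realType) (S : finType) (nA : nat) (P : S -> 'I_nA -> S -> R)
  (pi : policy R S nA) : (forall s a s', 0 <= P s a s') -> is_policy pi ->
  forall s q, 0 <= Ppi P pi s q.
Proof.
move=> HP Hpi s q; rewrite /Ppi; apply: sumr_ge0 => a _.
by apply: mulr_ge0; [case: (Hpi s) | apply: HP].
Qed.

Lemma Ppi_sum1 (R : realType) (S : finType) (nA : nat) (P : S -> 'I_nA -> S -> R)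
  (pi : policy R S nA) : (forall s a, \sum_(s' : S) P s a s' = 1) -> is_policy pi ->
  forall s, \sum_q Ppi P pi s q = 1.
Proof.
move=> HP Hpi s; rewrite /Ppi exchange_big /=.
rewrite (eq_bigr (fun a => pi s ord0 a)); first by case: (Hpi s).
by move=> a _; rewrite -mulr_sumr HP mulr1.
Qed.

Lemma Pt_ge0 (R : realType) (S : finType) (nA : nat) (P : S -> 'I_nA -> S -> R)
  (pi : policy R S nA) : (forall s a s', 0 <= P s a s') -> is_policy pi ->
  forall t s q, 0 <= Pt P pi t s q.
Proof.
move=> HP Hpi; elim=> [|t IH] s q /=; first by case: eqP.
apply: sumr_ge0 => r _; apply: mulr_ge0 => //; exact: Ppi_ge0.
Qed.

Lemma Pt_sum1 (R : realType) (S : finType) (nA : nat) (P : S -> 'I_nA -> S -> R)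
  (pi : policy R S nA) : (forall s a, \sum_(s' : S) P s a s' = 1) -> is_policy pi ->
  forall t s, \sum_q Pt P pi t s q = 1.
Proof.
move=> HP Hpi; elim=> [|t IH] s /=.
  by rewrite (bigD1 s) //= eqxx big1 ?addr0 // => q /negbTE; rewrite eq_sym => ->.
rewrite exchange_big /= -[RHS](IH s); apply: eq_bigr => r _.
by rewrite -mulr_sumr Ppi_sum1 // mulr1.
Qed.

Lemma PtS_left (R : realType) (S : finType) (nA : nat) (P : S -> 'I_nA -> S -> R)
  (pi : policy R S nA) t s q :
  Pt P pi t.+1 s q = \sum_r Ppi P pi s r * Pt P pi t r q.
Proof.
elim: t s q => [|t IH] s q.
  rewrite /= (bigD1 s) //= eqxx mul1r big1 ?addr0; last first.
    by move=> r /negbTE; rewrite eq_sym => ->; rewrite mul0r.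
  rewrite (bigD1 q) //= eqxx mulr1 big1 ?addr0 //.
  by move=> r /negbTE ->; rewrite mulr0.
transitivity (\sum_r Pt P pi t.+1 s r * Ppi P pi r q); first by [].
rewrite (eq_bigr (fun r => \sum_u Ppi P pi s u * Pt P pi t u r * Ppi P pi r q)); last first.
  by move=> r _; rewrite IH mulr_suml.
rewrite exchange_big /=; apply: eq_bigr => u _ /=.
by rewrite mulr_sumr; apply: eq_bigr => r _; rewrite mulrA.
Qed.
Definition Sn (R : realType) (S : finType) (nA : nat) (P : S -> 'I_nA -> S -> R)
  (gamma : R) (pi : policy R S nA) (f : S -> R) (n : nat) (s : S) : R :=
  \sum_(0 <= t < n) gamma ^+ t * \sum_q Pt P pi t s q * f q.

Definition G (R : realType) (S : finType) (nA : nat) (P : S -> 'I_nA -> S -> R)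
  (gamma : R) (pi : policy R S nA) (f : S -> R) (s : S) : R :=
  limn (fun n => Sn P gamma pi f n s).

Lemma Sn_rec (R : realType) (S : finType) (nA : nat) (P : S -> 'I_nA -> S -> R)
  (gamma : R) (pi : policy R S nA) (f : S -> R) n s :
  Sn P gamma pi f n.+1 s = f s + gamma * \sum_r Ppi P pi s r * Sn P gamma pi f n r.
Proof.
rewrite /Sn big_nat_recl // expr0 mul1r; congr (_ + _).
  rewrite /= (bigD1 s) //= eqxx mul1r big1 ?addr0 //.
  by move=> r /negbTE; rewrite eq_sym => ->; rewrite mul0r.
transitivity (\sum_(0 <= i < n) \sum_r gamma * (Ppi P pi s r *
   (gamma ^+ i * \sum_q Pt P pi i r q * f q))).
  apply: eq_bigr => i _.
  rewrite exprS -mulrA -mulr_sumr; congr (_ * _).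
  rewrite [RHS](eq_bigr (fun r => gamma ^+ i * (Ppi P pi s r * \sum_q Pt P pi i r q * f q))); last first.
    by move=> r _; rewrite mulrCA.
  rewrite -mulr_sumr; congr (_ * _).
  rewrite (eq_bigr (fun q => \sum_r Ppi P pi s r * Pt P pi i r q * f q)); last first.
    by move=> q _; rewrite PtS_left mulr_suml.
  rewrite exchange_big /=; apply: eq_bigr => r _.
  by rewrite mulr_sumr; apply: eq_bigr => q _; rewrite mulrA.
rewrite exchange_big /= mulr_sumr; apply: eq_bigr => r _.
by rewrite -mulr_sumr -mulr_sumr.
Qed.

Lemma cvg_bigsum (R : realType) (I : Type) (L : seq I) (u : I -> nat -> R) (l : I -> R) :
  (forall i, u i n @[n --> \oo] --> l i) ->
  (\sum_(i <- L) u i n) @[n --> \oo] --> \sum_(i <- L) l i.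
Proof.
move=> H; elim: L => [|i L IH].
  rewrite big_nil; under eq_fun do rewrite big_nil; exact: cvg_cst.
rewrite big_cons; under eq_fun do rewrite big_cons.
exact: cvgD.
Qed.

Lemma geo_le (R : realType) (gamma : R) n : 0 <= gamma < 1 ->
  \sum_(0 <= t < n) gamma ^+ t <= (1 - gamma)^-1.
Proof.
case/andP => g0 g1.
have h : (1 - gamma) * \sum_(0 <= t < n) gamma ^+ t = 1 - gamma ^+ n.
  elim: n => [|n IH]; first by rewrite big_geq // mulr0 expr0 subrr.
  rewrite big_nat_recr //= mulrDr IH exprS; ring.
have gp : 0 < 1 - gamma by rewrite subr_gt0.
rewrite -(ler_pM2l gp) h mulfV ?gt_eqF //.
by rewrite lerBlDr lerDl exprn_ge0.
Qed.
Lemma Sn_B (R : realType) (S : finType) (nA : nat) (P : S -> 'I_nA -> S -> R)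
  (gamma : R) (pi : policy R S nA) (f1 f2 : S -> R) n s :
  Sn P gamma pi (fun q => f1 q - f2 q) n s = Sn P gamma pi f1 n s - Sn P gamma pi f2 n s.
Proof.
rewrite /Sn -sumrB; apply: eq_bigr => t _.
by rewrite -mulrBr -sumrB; congr (_ * _); apply: eq_bigr => q _; rewrite mulrBr.
Qed.

Lemma Sn_cvg_ge0 (R : realType) (S : finType) (nA : nat) (P : S -> 'I_nA -> S -> R)
  (gamma : R) (pi : policy R S nA) (f : S -> R) s :
  is_mdp P gamma -> is_policy pi -> (forall q, 0 <= f q) ->
  cvgn (fun n => Sn P gamma pi f n s).
Proof.
move=> [HP0 [HP1 Hg]] Hpi Hf.
have g0 : 0 <= gamma by case/andP: Hg.
have term0 : forall t, 0 <= gamma ^+ t * \sum_q Pt P pi t s q * f q.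
  move=> t; apply: mulr_ge0; first exact: exprn_ge0.
  by apply: sumr_ge0 => q _; apply: mulr_ge0 => //; exact: Pt_ge0.
apply: nondecreasing_is_cvgn.
  apply/nondecreasing_seqP => n; rewrite /Sn big_nat_recr //=.
  by rewrite lerDl.
exists ((1 - gamma)^-1 * \sum_q f q) => _ [n _ <-].
apply: (@le_trans _ _ ((\sum_(0 <= t < n) gamma ^+ t) * \sum_q f q)); last first.
  apply: ler_wpM2r; first by apply: sumr_ge0.
  exact: geo_le.
rewrite /Sn mulr_suml; apply: ler_sum_nat => t _.
apply: ler_wpM2l; first exact: exprn_ge0.
apply: ler_sum => q _; rewrite -[leRHS]mul1r; apply: ler_wpM2r => //.
rewrite -(Pt_sum1 HP1 Hpi t s) (bigD1 q) //= lerDl.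
by apply: sumr_ge0 => r _; exact: Pt_ge0.
Qed.
Lemma Sn_cvg (R : realType) (S : finType) (nA : nat) (P : S -> 'I_nA -> S -> R)
  (gamma : R) (pi : policy R S nA) (f : S -> R) s :
  is_mdp P gamma -> is_policy pi -> cvgn (fun n => Sn P gamma pi f n s).
Proof.
move=> Hm Hpi.
pose K := \sum_r `|f r|.
pose f1 := fun q => f q + K.
pose f2 := fun q : S => K.
have -> : (fun n => Sn P gamma pi f n s) =
          (fun n => Sn P gamma pi f1 n s - Sn P gamma pi f2 n s).
  apply: funext => n; rewrite -Sn_B; congr Sn; apply: funext => q.
  by rewrite /f1 /f2 addrK.
apply: is_cvgB; apply: Sn_cvg_ge0 => // q; rewrite /f1 /f2.
  have h1 : `|f q| <= K by rewrite /K (bigD1 q) //= lerDl; apply: sumr_ge0.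
  have h2 := ler_norm (- f q); rewrite normrN in h2.
  lra.
by apply: sumr_ge0 => r _.
Qed.

Lemma G_cvg (R : realType) (S : finType) (nA : nat) (P : S -> 'I_nA -> S -> R)
  (gamma : R) (pi : policy R S nA) (f : S -> R) s :
  is_mdp P gamma -> is_policy pi ->
  Sn P gamma pi f n s @[n --> \oo] --> G P gamma pi f s.
Proof. by move=> Hm Hpi; apply: Sn_cvg. Qed.

Lemma G_fix (R : realType) (S : finType) (nA : nat) (P : S -> 'I_nA -> S -> R)
  (gamma : R) (pi : policy R S nA) (f : S -> R) s :
  is_mdp P gamma -> is_policy pi ->
  G P gamma pi f s = f s + gamma * \sum_r Ppi P pi s r * G P gamma pi f r.
Proof.
move=> Hm Hpi.
have H1 : Sn P gamma pi f n.+1 s @[n --> \oo] --> G P gamma pi f s.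
  by rewrite (cvg_shiftS (fun n => Sn P gamma pi f n s)); apply: G_cvg.
have H2 : Sn P gamma pi f n.+1 s @[n --> \oo] -->
          f s + gamma * \sum_r Ppi P pi s r * G P gamma pi f r.
  under eq_fun do rewrite Sn_rec.
  apply: cvgD; first exact: cvg_cst.
  apply: cvgMl_tmp; apply: cvg_bigsum => r.
  by apply: cvgMl_tmp; apply: G_cvg.
exact: (cvg_unique _ H1 H2).
Qed.
Lemma cmp_le0 (R : realType) (S : finType) (M : S -> S -> R) (gamma : R) (X A : S -> R) :
  (forall s r, 0 <= M s r) -> (forall s, \sum_r M s r = 1) -> 0 <= gamma < 1 ->
  (forall s, X s <= A s + gamma * \sum_r M s r * X r) -> (forall s, A s <= 0) ->
  forall s, X s <= 0.
Proof.
move=> M0 M1 /andP[g0 g1] HX HA s.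
have [s0 _ Hs0] := @arg_maxP _ R S s predT X isT.
have Hmax : forall r, X r <= X s0 by move=> r; apply: Hs0.
suff : X s0 <= 0 by apply: le_trans.
have h1 : \sum_r M s0 r * X r <= X s0.
  rewrite -[leRHS]mul1r -(M1 s0) mulr_suml; apply: ler_sum => r _.
  by apply: ler_wpM2l.
have h2 := HX s0; have h3 := HA s0.
have h4 : gamma * \sum_r M s0 r * X r <= gamma * X s0 by apply: ler_wpM2l.
nra.
Qed.

Lemma cmp_eq (R : realType) (S : finType) (M : S -> S -> R) (gamma : R) (X Y A : S -> R) :
  (forall s r, 0 <= M s r) -> (forall s, \sum_r M s r = 1) -> 0 <= gamma < 1 ->
  (forall s, X s = A s + gamma * \sum_r M s r * X r) ->
  (forall s, Y s = A s + gamma * \sum_r M s r * Y r) ->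
  forall s, X s = Y s.
Proof.
move=> M0 M1 Hg HX HY s; apply/eqP; rewrite eq_le; apply/andP; split.
- rewrite -subr_le0; apply: (@cmp_le0 _ _ M gamma (fun s => X s - Y s) (fun _ => 0)) => // r.
  have E : X r - Y r = gamma * \sum_r' M r r' * (X r' - Y r').
    rewrite {1}HX {1}HY [in RHS](eq_bigr (fun r' => M r r' * X r' - M r r' * Y r')); last by move=> r' _; rewrite mulrBr.
    rewrite sumrB; ring.
  by rewrite E add0r.
- rewrite -subr_le0; apply: (@cmp_le0 _ _ M gamma (fun s => Y s - X s) (fun _ => 0)) => // r.
  have E : Y r - X r = gamma * \sum_r' M r r' * (Y r' - X r').
    rewrite {1}HY {1}HX [in RHS](eq_bigr (fun r' => M r r' * Y r' - M r r' * X r')); last by move=> r' _; rewrite mulrBr.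
    rewrite sumrB; ring.
  by rewrite E add0r.
Qed.
Lemma V_G (R : realType) (S : finType) (nA : nat) (P : S -> 'I_nA -> S -> R)
  c h (gamma : R) (pi : policy R S nA) s :
  V P c h gamma pi s = G P gamma pi (cpi c h pi) s.
Proof. by []. Qed.

Lemma V_bellman (R : realType) (S : finType) (nA : nat) (P : S -> 'I_nA -> S -> R)
  c h (gamma : R) (pi : policy R S nA) s :
  is_mdp P gamma -> is_policy pi ->
  V P c h gamma pi s = cpi c h pi s + gamma * \sum_r Ppi P pi s r * V P c h gamma pi r.
Proof. by move=> Hm Hpi; rewrite !V_G; apply: G_fix. Qed.

Lemma Q_eq (R : realType) (S : finType) (nA : nat) (P : S -> 'I_nA -> S -> R)
  c h (gamma : R) (pi : policy R S nA) s a :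
  is_mdp P gamma -> is_policy pi ->
  Q P c h gamma pi s a = c s a + h s (pi s) + gamma * \sum_r P s a r * V P c h gamma pi r.
Proof.
move=> Hm Hpi.
pose T := fun t : nat => match t with
     | O => c s a + h s (pi s)
     | t'.+1 => gamma ^+ t *
         \sum_(s' : S) P s a s' * \sum_(q : S) Pt P pi t' s' q * cpi c h pi q
     end.
have HT : forall n, \sum_(0 <= t < n.+1) T t =
   c s a + h s (pi s) + gamma * \sum_r P s a r * Sn P gamma pi (cpi c h pi) n r.
  move=> n; rewrite big_nat_recl //; congr (_ + _).
  rewrite /Sn mulr_sumr.
  transitivity (\sum_(0 <= i < n) \sum_r gamma * (P s a r * (gamma ^+ i *
     \sum_q Pt P pi i r q * cpi c h pi q))).
    apply: eq_bigr => i _; rewrite /T exprS -mulrA -mulr_sumr; congr (_ * _).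
    by rewrite mulr_sumr; apply: eq_bigr => r _; rewrite mulrCA.
  rewrite exchange_big /=; apply: eq_bigr => r _.
  by rewrite mulr_sumr mulr_sumr.
have H2 : \sum_(0 <= t < n.+1) T t @[n --> \oo] -->
    c s a + h s (pi s) + gamma * \sum_r P s a r * V P c h gamma pi r.
  under eq_fun do rewrite HT.
  apply: cvgD; first exact: cvg_cst.
  apply: cvgMl_tmp; apply: cvg_bigsum => r.
  by apply: cvgMl_tmp; rewrite V_G; apply: G_cvg.
rewrite (cvg_shiftS (fun n => \sum_(0 <= t < n) T t)) in H2.
have -> : Q P c h gamma pi s a = limn (fun n => \sum_(0 <= t < n) T t) by [].
exact: (cvg_lim (@Rhausdorff R) H2).
Qed.

Lemma kappa_G (R : realType) (S : finType) (nA : nat) (P : S -> 'I_nA -> S -> R)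
  (gamma : R) (pi : policy R S nA) s q :
  kappa P gamma pi s q = (1 - gamma) * G P gamma pi (fun r => if r == q then 1 else 0) s.
Proof.
have E : (fun n => \sum_(0 <= t < n) gamma ^+ t *
      \sum_r Pt P pi t s r * (if r == q then 1 else 0)) =
    (fun n => \sum_(0 <= t < n) gamma ^+ t * Pt P pi t s q).
  apply: funext => n; apply: eq_bigr => t _; congr (_ * _).
  rewrite (bigD1 q) //= eqxx mulr1 big1 ?addr0 // => r /negbTE ->.
  by rewrite mulr0.
by rewrite /kappa /G /rseries /Sn E.
Qed.
Lemma G_ge0 (R : realType) (S : finType) (nA : nat) (P : S -> 'I_nA -> S -> R)
  (gamma : R) (pi : policy R S nA) (f : S -> R) s :
  is_mdp P gamma -> is_policy pi -> (forall q, 0 <= f q) -> 0 <= G P gamma pi f s.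
Proof.
move=> Hm Hpi Hf; have [HP0 [HP1 Hg]] := Hm.
rewrite -oppr_le0.
apply: (@cmp_le0 _ _ (Ppi P pi) gamma (fun s => - G P gamma pi f s) (fun s => - f s)).
- exact: Ppi_ge0.
- exact: Ppi_sum1.
- exact: Hg.
- move=> r; rewrite (G_fix _ _ Hm Hpi) opprD -mulrN -sumrN.
  by under eq_bigr do rewrite -mulrN.
- by move=> r; rewrite oppr_le0.
Qed.

Lemma kappa_ge0 (R : realType) (S : finType) (nA : nat) (P : S -> 'I_nA -> S -> R)
  (gamma : R) (pi : policy R S nA) s q :
  is_mdp P gamma -> is_policy pi -> 0 <= kappa P gamma pi s q.
Proof.
move=> Hm Hpi; have [_ [_ /andP[g0 g1]]] := Hm.
rewrite kappa_G; apply: mulr_ge0; first by rewrite subr_ge0 ltW.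
by apply: G_ge0 => // r; case: eqP.
Qed.

Lemma Gsum_fix (R : realType) (S : finType) (nA : nat) (P : S -> 'I_nA -> S -> R)
  (gamma : R) (pi : policy R S nA) (A : S -> R) s :
  is_mdp P gamma -> is_policy pi ->
  \sum_q G P gamma pi (fun r => if r == q then 1 else 0) s * A q =
  A s + gamma * \sum_r Ppi P pi s r *
     \sum_q G P gamma pi (fun r => if r == q then 1 else 0) r * A q.
Proof.
move=> Hm Hpi.
under eq_bigr do rewrite (G_fix _ _ Hm Hpi) mulrDl.
rewrite big_split /=; congr (_ + _).
  rewrite (bigD1 s) //= eqxx mul1r big1 ?addr0 // => r /negbTE.
  by rewrite eq_sym => ->; rewrite mul0r.
transitivity (\sum_q \sum_r gamma * (Ppi P pi s r *
   (G P gamma pi (fun r => if r == q then 1 else 0) r * A q))).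
  apply: eq_bigr => q _; rewrite -mulrA mulr_suml mulr_sumr.
  by apply: eq_bigr => r _; rewrite -mulrA.
rewrite exchange_big /= mulr_sumr; apply: eq_bigr => r _.
by rewrite mulr_sumr mulr_sumr.
Qed.
Definition Adv (R : realType) (S : finType) (nA : nat) (P : S -> 'I_nA -> S -> R)
  c h (gamma : R) (pi' pi : policy R S nA) (q : S) : R :=
  cpi c h pi' q + gamma * \sum_r Ppi P pi' q r * V P c h gamma pi r - V P c h gamma pi q.

Lemma PDL (R : realType) (S : finType) (nA : nat) (P : S -> 'I_nA -> S -> R)
  c h (gamma : R) (pi' pi : policy R S nA) s :
  is_mdp P gamma -> is_policy pi' -> is_policy pi ->
  V P c h gamma pi' s - V P c h gamma pi s =
  \sum_q G P gamma pi' (fun r => if r == q then 1 else 0) s * Adv P c h gamma pi' pi q.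
Proof.
move=> Hm Hpi' Hpi; have [HP0 [HP1 Hg]] := Hm.
apply: (@cmp_eq _ _ (Ppi P pi') gamma (fun s => V P c h gamma pi' s - V P c h gamma pi s)
  (fun s => \sum_q G P gamma pi' (fun r => if r == q then 1 else 0) s * Adv P c h gamma pi' pi q)
  (Adv P c h gamma pi' pi)).
- exact: Ppi_ge0.
- exact: Ppi_sum1.
- exact: Hg.
- move=> r; rewrite /Adv {1}(V_bellman c h r Hm Hpi').
  have E : \sum_u Ppi P pi' r u * (V P c h gamma pi' u - V P c h gamma pi u) =
    \sum_u Ppi P pi' r u * V P c h gamma pi' u - \sum_u Ppi P pi' r u * V P c h gamma pi u.
    by rewrite -sumrB; apply: eq_bigr => u _; rewrite mulrBr.
  rewrite E; ring.
- by move=> r; apply: Gsum_fix.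
Qed.

Lemma PDL_kappa (R : realType) (S : finType) (nA : nat) (P : S -> 'I_nA -> S -> R)
  c h (gamma : R) (pi' pi : policy R S nA) s :
  is_mdp P gamma -> is_policy pi' -> is_policy pi ->
  \sum_q kappa P gamma pi' s q * Adv P c h gamma pi' pi q =
  (1 - gamma) * (V P c h gamma pi' s - V P c h gamma pi s).
Proof.
move=> Hm Hpi' Hpi; rewrite PDL // mulr_sumr; apply: eq_bigr => q _.
by rewrite kappa_G mulrA.
Qed.

Lemma PDL_le (R : realType) (S : finType) (nA : nat) (P : S -> 'I_nA -> S -> R)
  c h (gamma : R) (pi' pi : policy R S nA) :
  is_mdp P gamma -> is_policy pi' -> is_policy pi ->
  (forall q, Adv P c h gamma pi' pi q <= 0) ->
  forall s, V P c h gamma pi' s - V P c h gamma pi s <= Adv P c h gamma pi' pi s.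
Proof.
move=> Hm Hpi' Hpi HA s; have [HP0 [HP1 Hg]] := Hm.
have Hg0 : 0 <= gamma by case/andP: Hg.
have HX : forall s, V P c h gamma pi' s - V P c h gamma pi s <= 0.
  apply: (@cmp_le0 _ _ (Ppi P pi') gamma _ (Adv P c h gamma pi' pi)) => //.
  - exact: Ppi_ge0.
  - exact: Ppi_sum1.
  - move=> r; rewrite PDL // {1}Gsum_fix //.
    under [X in _ <= _ + gamma * X]eq_bigr do rewrite PDL //.
    done.
rewrite PDL // Gsum_fix // -[leRHS]addr0 lerD2l.
apply: mulr_ge0_le0 => //.
apply: (@le_trans _ _ (\sum_(r : S) (0 : R))); last by rewrite big1.
apply: ler_sum => r _.
apply: mulr_ge0_le0; first exact: Ppi_ge0.
by rewrite -PDL.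
Qed.
Lemma dir_deriv (R : realType) (nA : nat) (omega : 'rV[R]_nA -> R) (x v : 'rV[R]_nA) :
  differentiable omega x ->
  (fun l : R => l^-1 *: (omega (l *: v + x) - omega x)) @ 0^'+ --> 'd omega x v.
Proof.
move=> Hd.
have Hv : derivable omega x v by apply: diff_derivable.
rewrite -(deriveE v Hd).
apply: cvg_dnbhs_at_right.
exact Hv.
Qed.

Lemma dd_ge (R : realType) (nA : nat) (omega : 'rV[R]_nA -> R) (x v : 'rV[R]_nA) (C : R) :
  differentiable omega x ->
  (forall l : R, 0 < l <= 1 -> C <= l^-1 *: (omega (l *: v + x) - omega x)) ->
  C <= 'd omega x v.
Proof.
move=> Hd H.
have Hc := dir_deriv (v := v) Hd.
rewrite -(cvg_lim (@Rhausdorff R) Hc).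
apply: limr_ge; first exact: (cvgP _ Hc).
near=> l; apply: H; apply/andP; split; first by near: l; exact: nbhs_right_gt.
by near: l; exact: nbhs_right_le.
Unshelve. all: by end_near.
Qed.

Lemma dd_le (R : realType) (nA : nat) (omega : 'rV[R]_nA -> R) (x v : 'rV[R]_nA) (C : R) :
  differentiable omega x ->
  (forall l : R, 0 < l <= 1 -> l^-1 *: (omega (l *: v + x) - omega x) <= C) ->
  'd omega x v <= C.
Proof.
move=> Hd H.
have Hc := dir_deriv (v := v) Hd.
rewrite -(cvg_lim (@Rhausdorff R) Hc).
apply: limr_le; first exact: (cvgP _ Hc).
near=> l; apply: H; apply/andP; split; first by near: l; exact: nbhs_right_gt.
by near: l; exact: nbhs_right_le.
Unshelve. all: by end_near.
Qed.
Lemma scaleRE (R : realType) (a b : R) : a *: b = a * b.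
Proof. by []. Qed.

Lemma simplex_comb (R : realType) (nA : nat) (p q : 'rV[R]_nA) (t : R) :
  simplex p -> simplex q -> 0 <= t <= 1 -> simplex (t *: p + (1 - t) *: q).
Proof.
move=> [p0 p1] [q0 q1] /andP[t0 t1]; split.
  move=> a; rewrite !mxE; apply: addr_ge0; apply: mulr_ge0 => //.
  by rewrite subr_ge0.
rewrite (eq_bigr (fun a => t * p ord0 a + (1 - t) * q ord0 a)); last by move=> a _; rewrite !mxE.
by rewrite big_split /= -!mulr_sumr p1 q1 !mulr1 subrKC.
Qed.

Lemma comb_eq (R : realType) (nA : nat) (x y : 'rV[R]_nA) (l : R) :
  l *: (y - x) + x = l *: y + (1 - l) *: x.
Proof. by apply/matrixP => i j; rewrite !mxE; ring. Qed.

Lemma breg_ge0 (R : realType) (nA : nat) (omega : 'rV[R]_nA -> R) (x y : 'rV[R]_nA) :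
  dgf omega -> simplex x -> simplex y -> 0 <= bregman omega y x.
Proof.
move=> [Hd Hc] Hx Hy.
have : 'd omega x (y - x) <= omega y - omega x.
  apply: dd_le; first exact: Hd.
  move=> l /andP[l0 l1]; rewrite scaleRE comb_eq.
  have := Hc y x Hy Hx l; rewrite (ltW l0) l1 => /(_ isT) H.
  rewrite ler_pdivrMl //.
  lra.
rewrite /bregman; lra.
Qed.

Lemma breg_self (R : realType) (nA : nat) (omega : 'rV[R]_nA -> R) (x : 'rV[R]_nA) :
  bregman omega x x = 0.
Proof. by rewrite /bregman !subrr linear0 subr0. Qed.
Lemma real2 (R : realType) (l f1 f2 f3 o1 o2 o3 d1 d2 d3 : R) : 0 < l ->
  f3 + (o2 - o3 - d2) <= f1 + (o1 - o3 - d1) -> f1 <= l * f2 + (1 - l) * f3 ->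
  d1 - d2 = l * d3 -> f3 - f2 + d3 <= l^-1 * (o1 - o2).
Proof. move=> l0 H1 H2 H3; rewrite ler_pdivlMl //; nra. Qed.

Lemma real3 (R : realType) (f1 f2 o1 o2 o3 d1 d2 d3 d4 : R) :
  f2 - f1 + d3 <= d4 -> d1 - d2 = d3 ->
  f2 + (o2 - o3 - d2) + (o1 - o2 - d4) <= f1 + (o1 - o3 - d1).
Proof. move=> H1 H2; lra. Qed.

Lemma three_point (R : realType) (nA : nat) (omega : 'rV[R]_nA -> R)
  (phi : 'rV[R]_nA -> R) (pt pp : 'rV[R]_nA) :
  dgf omega -> convex_on_simplex phi -> simplex pt -> simplex pp ->
  (forall p, simplex p -> phi pp + bregman omega pp pt <= phi p + bregman omega p pt) ->
  forall p, simplex p ->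
  phi pp + bregman omega pp pt + bregman omega p pp <= phi p + bregman omega p pt.
Proof.
move=> [Hd Hc] Hphi Ht Hpp Hopt p Hp.
have Hlin : forall a b : 'rV[R]_nA, 'd omega pt a - 'd omega pt b = 'd omega pt (a - b).
  by move=> a b; rewrite linearB.
have key : phi pp - phi p + 'd omega pt (p - pp) <= 'd omega pp (p - pp).
  apply: dd_ge; first exact: Hd.
  move=> l /andP[l0 l1]; rewrite scaleRE.
  have Hpl : simplex (l *: (p - pp) + pp) by rewrite comb_eq; apply: simplex_comb => //; rewrite (ltW l0).
  have H1 := Hopt _ Hpl.
  have H2 : phi (l *: (p - pp) + pp) <= l * phi p + (1 - l) * phi pp.
    by rewrite comb_eq; apply: Hphi => //; rewrite (ltW l0).
  have H3 : 'd omega pt (l *: (p - pp) + pp - pt) - 'd omega pt (pp - pt) = l * 'd omega pt (p - pp).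
    rewrite Hlin; have -> : l *: (p - pp) + pp - pt - (pp - pt) = l *: (p - pp).
      by apply/matrixP => i j; rewrite !mxE; ring.
    by rewrite linearZ.
  exact: (real2 l0 H1 H2 H3).
have E : 'd omega pt (p - pt) - 'd omega pt (pp - pt) = 'd omega pt (p - pp).
  rewrite Hlin; have -> : p - pt - (pp - pt) = p - pp.
    by apply/matrixP => i j; rewrite !mxE; ring.
  by [].
rewrite /bregman; have H := @real3 _ _ _ _ _ _ _ _ _ _ key E; exact: H.
Qed.
Lemma inner_comb (R : realType) (nA : nat) (u : 'I_nA -> R) (p q : 'rV[R]_nA) (t : R) :
  inner u (t *: p + (1 - t) *: q) = t * inner u p + (1 - t) * inner u q.
Proof.
rewrite /inner !mulr_sumr -big_split /=; apply: eq_bigr => a _.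
by rewrite !mxE; ring.
Qed.

Lemma real_conv (R : realType) (e t a b c d f : R) : 0 < e -> 0 <= t <= 1 ->
  a <= t * b + (1 - t) * c ->
  e * (t * d + (1 - t) * f + a) <= t * (e * (d + b)) + (1 - t) * (e * (f + c)).
Proof.
move=> e0 /andP[t0 t1] H.
have : e * a <= e * (t * b + (1 - t) * c) by rewrite ler_pM2l.
move=> H'; have -> : t * (e * (d + b)) + (1 - t) * (e * (f + c)) =
  e * (t * d + (1 - t) * f) + e * (t * b + (1 - t) * c) by ring.
rewrite mulrDr lerD2l; exact: H'.
Qed.

Lemma phi_convex (R : realType) (S : finType) (nA : nat) (h : S -> 'rV[R]_nA -> R)
  (u : 'I_nA -> R) (e : R) (q : S) :
  0 < e -> convex_on_simplex (h q) ->
  convex_on_simplex (fun p => e * (inner u p + h q p)).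
Proof.
move=> e0 Hh p1 p2 H1 H2 t Ht.
have H := Hh p1 p2 H1 H2 t Ht; rewrite inner_comb.
have H' := @real_conv _ _ _ _ _ _ (inner u p1) (inner u p2) e0 Ht H.
exact: H'.
Qed.

Lemma Adv_self (R : realType) (S : finType) (nA : nat) (P : S -> 'I_nA -> S -> R)
  c h (gamma : R) (pi : policy R S nA) q :
  is_mdp P gamma -> is_policy pi -> Adv P c h gamma pi pi q = 0.
Proof. by move=> Hm Hpi; rewrite /Adv -V_bellman // subrr. Qed.

Lemma ell_eq (R : realType) (S : finType) (nA : nat) (P : S -> 'I_nA -> S -> R)
  c h (gamma : R) (pi' pi : policy R S nA) q :
  is_mdp P gamma -> is_policy pi' -> is_policy pi ->
  inner (Q P c h gamma pi q) (pi' q) + h q (pi' q) =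
  Adv P c h gamma pi' pi q + V P c h gamma pi q + h q (pi q).
Proof.
move=> Hm Hpi' Hpi.
have [_ H1] := Hpi' q.
rewrite /inner (eq_bigr (fun a => pi' q ord0 a * c q a + pi' q ord0 a * h q (pi q) +
   gamma * (pi' q ord0 a * \sum_r P q a r * V P c h gamma pi r))); last first.
  by move=> a _; rewrite Q_eq //; ring.
rewrite !big_split /= -mulr_sumr -mulr_suml H1 mul1r /Adv /cpi.
have -> : \sum_i pi' q ord0 i * \sum_r P q i r * V P c h gamma pi r =
          \sum_r Ppi P pi' q r * V P c h gamma pi r.
  rewrite /Ppi; under [RHS]eq_bigr do rewrite mulr_suml.
  rewrite exchange_big /=; apply: eq_bigr => a _.
  by rewrite mulr_sumr; apply: eq_bigr => r _; rewrite mulrA.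
ring.
Qed.

Lemma sum_tel_eta (R : realType) (d eta : nat -> R) :
  (forall t, 0 <= d t) -> (forall t, 0 < eta t) -> (forall t, eta t <= eta t.+1) ->
  forall k, \sum_(0 <= t < k) (d t - d t.+1) / eta t + d k / eta k <= d 0%N / eta 0%N.
Proof.
move=> d0 e0 em; elim=> [|k IH]; first by rewrite big_geq // add0r.
rewrite big_nat_recr //=.
apply: le_trans IH; rewrite -addrA lerD2l.
have : d k.+1 / eta k.+1 <= d k.+1 / eta k.
  by apply: ler_wpM2l => //; rewrite lef_pV2 ?posrE.
rewrite mulrBl; lra.
Qed.
Lemma real_p1 (R : realType) (e A1 Vq h0 b1 b2 : R) : 0 < e -> 0 <= b1 -> 0 <= b2 ->
  e * (A1 + Vq + h0) + b1 + b2 <= e * (0 + Vq + h0) + 0 -> A1 <= 0.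
Proof.
move=> e0 b10 b20 H.
have : e * A1 <= 0 by lra.
by rewrite pmulr_rle0.
Qed.

Lemma real_p2 (R : realType) (e A1 As Vq h0 b1 d1 d0 : R) : 0 <= b1 ->
  e * (A1 + Vq + h0) + b1 + d1 <= e * (As + Vq + h0) + d0 -> e * (A1 - As) <= d0 - d1.
Proof. move=> b10 H; lra. Qed.

Lemma sum_lin (R : realType) (S : finType) (w x y z u v : S -> R) (e : R) :
  0 < e -> (forall q, 0 <= w q) -> (forall q, x q - y q - z q <= (u q - v q) / e) ->
  \sum_q w q * x q - \sum_q w q * y q - \sum_q w q * z q <=
  (\sum_q w q * u q - \sum_q w q * v q) / e.
Proof.
move=> e0 w0 H.
rewrite -!sumrB mulr_suml; apply: ler_sum => q _.
rewrite -!mulrBr -mulrA; apply: ler_wpM2l => //.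
Qed.

Lemma real_final (R : realType) (g K y A d e : R) : 0 < e ->
  (1 - g) * K * y <= A + d / e -> y * (e * (1 - g) * K) <= e * A + d.
Proof.
move=> e0 H.
have H2 : e * ((1 - g) * K * y) <= e * (A + d / e) by rewrite ler_pM2l.
have E : e * (A + d / e) = e * A + d by rewrite mulrDr mulrCA mulfV ?gt_eqF ?mulr1.
rewrite E in H2.
have -> : y * (e * (1 - g) * K) = e * ((1 - g) * K * y) by ring.
exact: H2.
Qed.
Unset Implicit Arguments.

Theorem theorem3p3 (R : realType) (S : finType) (nA : nat)
  (P : S -> 'I_nA -> S -> R) (c : S -> 'I_nA -> R)
  (h : S -> 'rV[R]_nA -> R) (gamma : R)
  (omega : 'rV[R]_nA -> R) (muh : R)
  (pistar : policy R S nA) (eta : nat -> R) (pis : nat -> policy R S nA) :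
  is_mdp P gamma ->
  dgf omega ->
  reg_ok omega h muh ->
  optimal P c h gamma pistar ->
  (forall t, 0 < eta t) ->
  (forall t, eta t <= eta t.+1) ->
  is_pmd P c h gamma omega eta pis ->
  forall (k : nat) (s : S), (1 <= k)%N ->
    V P c h gamma (pis k) s - V P c h gamma pistar s <=
      (\sum_(q : S) kappa P gamma pistar s q *
          (eta 0%N * (V P c h gamma (pis 0%N) q - V P c h gamma pistar q)
           + bregman omega (pistar q) (pis 0%N q)))
      / (eta 0%N * (1 - gamma) * k%:R).
Proof.
move=> Hm Hdgf Hreg Hopt Heta Hmon Hpmd k s Hk.
have [HP0 [HP1 Hg]] := Hm.
have /andP[g0 g1] := Hg.
have [Hpis0 Hpmd'] := Hpmd.
have Hpol : forall t, is_policy (pis t).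
  by case=> [|t] // q; case: (Hpmd' t q).
have Hstar : is_policy pistar by case: Hopt.
pose Dt t q := bregman omega (pistar q) (pis t q).
pose kap q := kappa P gamma pistar s q.
have kap0 : forall q, 0 <= kap q by move=> q; apply: kappa_ge0.
have Dt0 : forall t q, 0 <= Dt t q by move=> t q; exact: (breg_ge0 Hdgf (Hpol t q) (Hstar q)).
have step1 : forall t q, Adv P c h gamma (pis t.+1) (pis t) q <= 0 /\
   eta t * (Adv P c h gamma (pis t.+1) (pis t) q - Adv P c h gamma pistar (pis t) q)
     <= Dt t q - Dt t.+1 q.
  move=> t q.
  have [Hsim Hmin] := Hpmd' t q.
  pose phi := fun p => eta t * (inner (Q P c h gamma (pis t) q) p + h q p).
  have Hc : convex_on_simplex phi.
    by apply: phi_convex; [exact: Heta | case: (Hreg.2 q)].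
  have T := three_point Hdgf Hc (Hpol t q) Hsim Hmin.
  have E1 := ell_eq c h q Hm (Hpol t.+1) (Hpol t).
  have E0 := ell_eq c h q Hm (Hpol t) (Hpol t).
  have Es := ell_eq c h q Hm Hstar (Hpol t).
  rewrite Adv_self // in E0.
  have b1 := breg_ge0 Hdgf (Hpol t q) Hsim.
  split.
    have T0 := T _ (Hpol t q); rewrite /phi E1 E0 breg_self in T0.
    have b2 := breg_ge0 Hdgf Hsim (Hpol t q).
    exact: (real_p1 (Heta t) b1 b2 T0).
  have Ts := T _ (Hstar q); rewrite /phi E1 Es in Ts.
  exact: (real_p2 b1 Ts).
have step2 : forall t q, V P c h gamma (pis t.+1) q - V P c h gamma (pis t) q <=
    Adv P c h gamma (pis t.+1) (pis t) q.
  move=> t; apply: PDL_le => // q; exact: (step1 t q).1.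
have mono1 : forall t q, V P c h gamma (pis t.+1) q <= V P c h gamma (pis t) q.
  move=> t q; have := step2 t q; have := (step1 t q).1; lra.
have step3 : forall t,
  \sum_q kap q * V P c h gamma (pis t.+1) q - \sum_q kap q * V P c h gamma (pis t) q
   - \sum_q kap q * Adv P c h gamma pistar (pis t) q <=
  (\sum_q kap q * Dt t q - \sum_q kap q * Dt t.+1 q) / eta t.
  move=> t; apply: sum_lin => // q.
  rewrite ler_pdivlMr //.
  have := (step1 t q).2; have := step2 t q.
  move: (Adv P c h gamma (pis t.+1) (pis t) q) (Adv P c h gamma pistar (pis t) q)
    (V P c h gamma (pis t.+1) q) (V P c h gamma (pis t) q) (Dt t q) (Dt t.+1 q) => a1 a2 v1 v0 d0 d1.
  move=> H1 H2; have e0 := Heta t.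
  nra.
pose d t := \sum_q kap q * Dt t q.
pose EV t := \sum_q kap q * V P c h gamma (pis t) q.
have PK : forall t, \sum_q kap q * Adv P c h gamma pistar (pis t) q =
    (1 - gamma) * (V P c h gamma pistar s - V P c h gamma (pis t) s).
  by move=> t; apply: PDL_kappa.
have step4 : forall n, EV n - EV 0%N +
    (1 - gamma) * \sum_(0 <= t < n) (V P c h gamma (pis t) s - V P c h gamma pistar s)
    <= \sum_(0 <= t < n) (d t - d t.+1) / eta t.
  elim=> [|n IH]; first by rewrite !big_geq // subrr mulr0 addr0.
  rewrite !big_nat_recr //=.
  have := step3 n; rewrite PK -/(EV n) -/(EV n.+1) -/(d n) -/(d n.+1).
  move: IH; move: (EV n.+1) (EV n) (EV 0%N) ((d n - d n.+1) / eta n)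
    (\sum_(0 <= t < n) (V P c h gamma (pis t) s - V P c h gamma pistar s))
    (\sum_(0 <= i < n) (d i - d i.+1) / eta i)
    (V P c h gamma pistar s) (V P c h gamma (pis n) s) => e1 e0 e00 x y z vs vn.
  move=> H1 H2; lra.
have d0 : forall t, 0 <= d t by move=> t; apply: sumr_ge0 => q _; apply: mulr_ge0.
have tel := sum_tel_eta d0 Heta Hmon k.
have dk : 0 <= d k / eta k by apply: divr_ge0 => //; exact: ltW.
have monon : forall n t, V P c h gamma (pis (t + n)%N) s <= V P c h gamma (pis t) s.
  elim=> [|n IH] t; first by rewrite addn0.
  by rewrite addnS; apply: le_trans (IH t); apply: mono1.
have sumV : k%:R * (V P c h gamma (pis k) s - V P c h gamma pistar s) <=
    \sum_(0 <= t < k) (V P c h gamma (pis t) s - V P c h gamma pistar s).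
  have E : \sum_(0 <= t < k) (V P c h gamma (pis k) s - V P c h gamma pistar s) =
    k%:R * (V P c h gamma (pis k) s - V P c h gamma pistar s).
    by rewrite sumr_const_nat subn0 mulr_natl.
  rewrite -E; apply: ler_sum_nat => t /andP[_ tk]; rewrite lerD2r.
  by rewrite -(subnKC (ltnW tk)); apply: monon.
have optk : \sum_q kap q * V P c h gamma pistar q <= EV k.
  apply: ler_sum => q _; apply: ler_wpM2l => //.
  by case: Hopt => _ /(_ _ (Hpol k)).
have Hsum : \sum_q kap q * (eta 0%N * (V P c h gamma (pis 0%N) q - V P c h gamma pistar q)
           + bregman omega (pistar q) (pis 0%N q)) =
    eta 0%N * (EV 0%N - \sum_q kap q * V P c h gamma pistar q) + d 0%N.
  rewrite /EV /d /Dt -sumrB mulr_sumr -big_split /=; apply: eq_bigr => q _; ring.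
rewrite -/kap Hsum.
have pos : 0 < eta 0%N * (1 - gamma) * k%:R.
  by rewrite !mulr_gt0 // ?subr_gt0 // ltr0n.
rewrite ler_pdivlMr //.
apply: real_final; first exact: Heta.
have S4 := step4 k.
move: S4 tel dk sumV optk.
move: (EV k) (EV 0%N) (\sum_q kap q * V P c h gamma pistar q)
  (\sum_(0 <= t < k) (V P c h gamma (pis t) s - V P c h gamma pistar s))
  (\sum_(0 <= t < k) (d t - d t.+1) / eta t) (d k / eta k) (d 0%N / eta 0%N)
  (V P c h gamma (pis k) s - V P c h gamma pistar s) (k%:R : R) => ek e0 es sv sd dkk d00 y K.
move=> H1 H2 H3 H4 H5.
have g1' : 0 <= 1 - gamma by rewrite subr_ge0 ltW.
have H6 : (1 - gamma) * (K * y) <= (1 - gamma) * sv by apply: ler_wpM2l.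
rewrite -mulrA; lra.
Qed.
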